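(* Fix $0<\delta<\tfrac12$ and $0<\lambda\le 1\le\Lambda$. Let $\Omega\subset\mathbb H^n$ be open, let $A\in M_n(\lambda,\Lambda,\Omega)$ be continuous at a point $z_0\in\Omega$, and assume the matrix $M:=A(z_0)$ is symplectic. Let $\alpha=\frac{Q-2}{4}+\delta$ and $g(\zeta)=-\frac1\alpha\phi_M(\zeta)^{-\alpha}$ for $\zeta\ne0$. Then there exists $\epsilon_0>0$, depending only on $\lambda,\Lambda,Q,\delta$ and the function $\epsilon\mapsto\omega_A(z_0;\epsilon)$, such that $$-\mathrm{tr}\big(A(z)\,(D^2_{\mathbb H}g)(\zeta)\big)\ge0\qquad\text{for all }z\in B_{\epsilon_0}(z_0)\cap\Omega\text{ and all }\zeta\neq0.$$ If in addition $A\in C(\Omega,\omega)$ for a function $\omega$ as below, then $\epsilon_0$ can be chosen depending only on $\lambda,\Lambda,Q,\delta,\omega$ (independent of $z_0$ and $A$).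
   Context: Points are $z=(x,t)$, $\zeta=(\xi,\tau)\in\mathbb R^{2n+1}$. $J=\begin{pmatrix}0&-\mathbb I_n\\ \mathbb I_n&0\end{pmatrix}$, $Q=2n+2$. The Heisenberg group $\mathbb H^n$ is $\mathbb R^{2n+1}$ with $(x,t)\circ(\xi,\tau)=(x+\xi,t+\tau+2\langle Jx,\xi\rangle)$; $\rho(x,t)=(|x|^4+t^2)^{1/4}$, $d(z,\zeta)=\rho(z^{-1}\circ\zeta)$ with $(x,t)^{-1}=(-x,-t)$, and $B_R(z)=\{\zeta:d(z,\zeta)<R\}$. $X_i=\partial_{x_i}+2(Jx)_i\partial_t$, $D^2_{\mathbb H}\psi=\big(\tfrac12(X_iX_j+X_jX_i)\psi\big)_{i,j=1}^{2n}$. $M_n(\lambda,\Lambda,\Omega)$ is the set of symmetric matrix-valued functions $A$ on $\Omega$ with $\det A(z)=1$ and $\lambda\mathbb I_{2n}\le A(z)\le\Lambda\mathbb I_{2n}$ for all $z\in\Omega$. A matrix $M$ is symplectic if $M^{-1}=J^tMJ$. For symmetric positive definite constant $M$, $\phi_M(x,t)=\langle M^{-1}x,x\rangle^2+t^2$. The modulus of continuity is $\omega_A(z_0;\epsilon)=\sup_{z\in B_\epsilon(z_0)\cap\Omega}\|A(z)-A(z_0)\|$ (operator norm). Given a nondecreasing $\omega:[0,1)\to[0,1)$ with $\omega(0)=\lim_{s\to0^+}\omega(s)=0$, $C(\Omega,\omega)$ is the set of continuous matrix functions $A$ on $\Omega$ with $\omega_A(z_0;\epsilon)\le\omega(\epsilon)$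 for all $z_0\in\Omega$, $0<\epsilon<1$. *)

(* Defs.v *)
From mathcomp Require Import ssreflect ssrbool ssrfun eqtype ssrnat seq choice fintype bigop.
From mathcomp Require Import fingroup perm.
From Stdlib Require Import Reals ClassicalEpsilon.
Set Implicit Arguments. Unset Strict Implicit.
Local Open Scope R_scope.

(* the least upper bound of E when it exists (junk 0 otherwise) *)
Definition Rsup (E : R -> Prop) : R :=
  epsilon (inhabits 0%R) (fun l => is_lub E l).

(* the (ordinary) derivative of phi at s when it exists (junk otherwise);
   unique by uniqueness of limits *)
Definition lim_deriv (phi : R -> R) (s : R) : R :=
  epsilon (inhabits 0%R) (fun l => derivable_pt_lim phi s l).

Definition vec (m : nat) := 'I_m -> R.
Definition mat (m : nat) := 'I_m -> 'I_m -> R.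

Definition rsum (m : nat) (F : 'I_m -> R) : R := \big[Rplus/0%R]_(i < m) F i.

Definition dotv (m : nat) (u v : vec m) : R := rsum (fun i => u i * v i).
Definition vnorm (m : nat) (v : vec m) : R := sqrt (dotv v v).
Definition matvec (m : nat) (B : mat m) (v : vec m) : vec m :=
  fun i => rsum (fun j => B i j * v j).
Definition matmul (m : nat) (B C : mat m) : mat m :=
  fun i j => rsum (fun k => B i k * C k j).
Definition matsub (m : nat) (B C : mat m) : mat m := fun i j => B i j - C i j.
Definition transp (m : nat) (B : mat m) : mat m := fun i j => B j i.
Definition idm (m : nat) : mat m := fun i j => if i == j then 1 else 0.
Definition trace (m : nat) (B : mat m) : R := rsum (fun i => B i i).

Definition det (m : nat) (B : mat m) : R :=
  \big[Rplus/0%R]_(s : {perm 'I_m})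
     ((-1) ^ (odd_perm s) * \big[Rmult/1%R]_(i < m) B i (s i)).

Definition opnorm (m : nat) (B : mat m) : R :=
  Rsup (fun r => exists v : vec m, vnorm v = 1 /\ r = vnorm (matvec B v)).

(* the inverse matrix when it exists (junk otherwise) *)
Definition invm (m : nat) (B : mat m) : mat m :=
  epsilon (inhabits (@idm m))
    (fun C => matmul B C = @idm m /\ matmul C B = @idm m).

(* J = [[0, -I_n], [I_n, 0]] of size 2n *)
Definition Jmat (n : nat) : mat (2 * n) :=
  fun i j =>
    if ((nat_of_ord i < n) && (nat_of_ord j == nat_of_ord i + n))%nat then -1
    else if ((n <= nat_of_ord i) && (nat_of_ord j + n == nat_of_ord i))%nat then 1
    else 0.

(* M symplectic : M^{-1} = J^t M J, i.e. J^t M J is a two-sided inverse of M *)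
Definition symplectic (n : nat) (M : mat (2 * n)) : Prop :=
  let N := matmul (transp (@Jmat n)) (matmul M (@Jmat n)) in
  matmul M N = @idm (2 * n) /\ matmul N M = @idm (2 * n).

Definition pt (n : nat) := (vec (2 * n) * R)%type.

Definition origin (n : nat) : pt n := (fun _ => 0, 0).

Definition Hmul (n : nat) (z w : pt n) : pt n :=
  (fun i => fst z i + fst w i,
   snd z + snd w + 2 * dotv (matvec (@Jmat n) (fst z)) (fst w)).

Definition Hinv (n : nat) (z : pt n) : pt n := (fun i => - fst z i, - snd z).

Definition rho (n : nat) (z : pt n) : R :=
  sqrt (sqrt ((dotv (fst z) (fst z)) ^ 2 + (snd z) ^ 2)).

Definition Hdist (n : nat) (z w : pt n) : R := rho (Hmul (Hinv z) w).

Definition H_open (n : nat) (Om : pt n -> Prop) : Prop :=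
  forall z, Om z -> exists r, 0 < r /\ forall w, Hdist z w < r -> Om w.

Definition shift_x (n : nat) (z : pt n) (i : 'I_(2 * n)) (s : R) : pt n :=
  (fun k => if k == i then fst z k + s else fst z k, snd z).
Definition shift_t (n : nat) (z : pt n) (s : R) : pt n := (fst z, snd z + s).

Definition Dx (n : nat) (i : 'I_(2 * n)) (psi : pt n -> R) (z : pt n) : R :=
  lim_deriv (fun s => psi (shift_x z i s)) 0.
Definition Dt (n : nat) (psi : pt n -> R) (z : pt n) : R :=
  lim_deriv (fun s => psi (shift_t z s)) 0.

Definition Xf (n : nat) (i : 'I_(2 * n)) (psi : pt n -> R) (z : pt n) : R :=
  Dx i psi z + 2 * matvec (@Jmat n) (fst z) i * Dt psi z.

Definition HessH (n : nat) (psi : pt n -> R) (z : pt n) : mat (2 * n) :=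
  fun i j => (Xf i (Xf j psi) z + Xf j (Xf i psi) z) / 2.

Definition Qdim (n : nat) : R := INR (2 * n + 2).

Definition phiM (n : nat) (M : mat (2 * n)) (z : pt n) : R :=
  (dotv (matvec (invm M) (fst z)) (fst z)) ^ 2 + (snd z) ^ 2.

Definition alpha (n : nat) (delta : R) : R := (Qdim n - 2) / 4 + delta.

(* g(zeta) = -(1/alpha) phi_M(zeta)^{-alpha}  (only used for zeta <> 0) *)
Definition gfun (n : nat) (delta : R) (M : mat (2 * n)) (z : pt n) : R :=
  - (1 / alpha n delta) * Rpower (phiM M z) (- alpha n delta).

Definition symm (m : nat) (B : mat m) : Prop := forall i j, B i j = B j i.

Definition in_Mn (n : nat) (lam Lam : R) (Om : pt n -> Prop)
    (A : pt n -> mat (2 * n)) : Prop :=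
  forall z, Om z ->
    symm (A z) /\ det (A z) = 1 /\
    (forall v : vec (2 * n),
       lam * dotv v v <= dotv (matvec (A z) v) v <= Lam * dotv v v).

Definition cont_at (n : nat) (Om : pt n -> Prop) (A : pt n -> mat (2 * n))
    (z0 : pt n) : Prop :=
  forall e, 0 < e -> exists r, 0 < r /\
    forall z, Om z -> Hdist z0 z < r -> opnorm (matsub (A z) (A z0)) < e.

Definition omegaA (n : nat) (Om : pt n -> Prop) (A : pt n -> mat (2 * n))
    (z0 : pt n) (eps : R) : R :=
  Rsup (fun r => exists z, Om z /\ Hdist z0 z < eps /\
                   r = opnorm (matsub (A z) (A z0))).

Definition modulus (om : R -> R) : Prop :=
  (forall s, 0 <= s < 1 -> 0 <= om s < 1) /\
  (forall s t, 0 <= s -> s <= t -> t < 1 -> om s <= om t) /\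
  om 0 = 0 /\
  (forall e, 0 < e -> exists r, 0 < r /\ forall s, 0 < s < r -> om s < e).

Definition in_C (n : nat) (Om : pt n -> Prop) (om : R -> R)
    (A : pt n -> mat (2 * n)) : Prop :=
  (forall z, Om z -> cont_at Om A z) /\
  (forall z0 eps, Om z0 -> 0 < eps < 1 -> omegaA Om A z0 eps <= om eps).

(* Main.v *)
Require Import Defs.
From HB Require Import structures.
From mathcomp Require Import ssreflect ssrbool ssrfun eqtype ssrnat seq choice fintype bigop.
From mathcomp Require Import fingroup perm.
From Stdlib Require Import Reals ClassicalEpsilon Lra FunctionalExtensionality.
From Coquelicot Require Import Coquelicot.
From Stdlib Require Import Lia.
From mathcomp Require Import zify.
Set Implicit Arguments. Unset Strict Implicit.
Local Open Scope R_scope.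
HB.instance Definition _ := Monoid.isComLaw.Build R 0 Rplus (fun a b c => esym (Rplus_assoc a b c)) Rplus_comm Rplus_0_l.
HB.instance Definition _ := Monoid.isMulLaw.Build R 0 Rmult Rmult_0_l Rmult_0_r.
HB.instance Definition _ := Monoid.isAddLaw.Build R Rmult Rplus Rmult_plus_distr_r Rmult_plus_distr_l.
Section Big.
Variable m : nat.
Implicit Types f g : 'I_m -> R.

Lemma rsum_ext f g : (forall i, f i = g i) -> rsum f = rsum g.
Proof. move=> H; rewrite /rsum; apply: eq_bigr => i _; exact: H. Qed.

Lemma rsum_plus f g : rsum (fun i => f i + g i) = rsum f + rsum g.
Proof. by rewrite /rsum big_split. Qed.

Lemma rsum_scal c f : rsum (fun i => c * f i) = c * rsum f.
Proof. by rewrite /rsum big_distrr. Qed.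

Lemma rsum_opp f : rsum (fun i => - f i) = - rsum f.
Proof. rewrite (@rsum_ext _ (fun i => (-1) * f i)); [|move=> i; ring]. rewrite rsum_scal; ring. Qed.

Lemma rsum_minus f g : rsum (fun i => f i - g i) = rsum f - rsum g.
Proof. rewrite /Rminus -rsum_opp -rsum_plus //. Qed.

Lemma rsum_ind (i : 'I_m) f : rsum (fun k => if k == i then f k else 0) = f i.
Proof. by rewrite /rsum -big_mkcond big_pred1_eq. Qed.

Lemma rsum_ind_mul (i : 'I_m) f : rsum (fun k => f k * (if k == i then 1 else 0)) = f i.
Proof. rewrite -(rsum_ind i f); apply rsum_ext => k; case: (k == i); ring. Qed.

Lemma rsum_ind_mul' (i : 'I_m) f : rsum (fun k => (if i == k then 1 else 0) * f k) = f i.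
Proof. rewrite -(rsum_ind i f); apply rsum_ext => k; rewrite eq_sym; case: (k == i); ring. Qed.

Lemma rsum_swap (F : 'I_m -> 'I_m -> R) :
  rsum (fun i => rsum (fun j => F i j)) = rsum (fun j => rsum (fun i => F i j)).
Proof. by rewrite /rsum exchange_big. Qed.

Lemma rsum_ge0 f : (forall i, 0 <= f i) -> 0 <= rsum f.
Proof.
move=> H; rewrite /rsum; elim/big_ind: _ => //; [lra| move=> x y Hx Hy; lra].
Qed.

Lemma rsum_le f g : (forall i, f i <= g i) -> rsum f <= rsum g.
Proof.
move=> H; have: 0 <= rsum (fun i => g i - f i) by apply rsum_ge0 => i; move: (H i); lra.
rewrite rsum_minus; lra.
Qed.

Lemma rsum_const c : rsum (fun _ : 'I_m => c) = INR m * c.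
Proof.
rewrite /rsum big_const_ord. elim: m => [|k IH]; first (simpl; ring).
rewrite S_INR. change (c + iter k (Rplus c) 0 = (INR k + 1) * c). rewrite IH; ring.
Qed.

Lemma rsum_pos_ex f : (forall i, 0 <= f i) -> (exists i, 0 < f i) -> 0 < rsum f.
Proof.
move=> H [i Hi]. rewrite /rsum (bigD1 i) //=.
apply: Rplus_lt_le_0_compat => //.
elim/big_ind: _ => //; [lra| move=> x y Hx Hy; lra].
Qed.
End Big.
Section Lin.
Variable m : nat.
Implicit Types (v w z : vec m) (C D E : mat m).

Definition Qf C v w := dotv (matvec C v) w.
Definition Nv v := dotv v v.
Definition lc (a : R) v (b : R) w : vec m := fun k => a * v k + b * w k.

Lemma dotv_sym v w : dotv v w = dotv w v.
Proof. apply rsum_ext => i; ring. Qed.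

Lemma dotv_lcl a b v w z : dotv (lc a v b w) z = a * dotv v z + b * dotv w z.
Proof.
rewrite /dotv -!rsum_scal -rsum_plus; apply rsum_ext => i; rewrite /lc; ring.
Qed.

Lemma dotv_lcr a b v w z : dotv z (lc a v b w) = a * dotv z v + b * dotv z w.
Proof. by rewrite dotv_sym dotv_lcl (dotv_sym v) (dotv_sym w). Qed.

Lemma matvec_lc C a b v w : matvec C (lc a v b w) = lc a (matvec C v) b (matvec C w).
Proof.
apply functional_extensionality => i.
rewrite /matvec /lc -!rsum_scal -rsum_plus; apply rsum_ext => k; ring.
Qed.

Lemma matvec_matmul C D v : matvec (matmul C D) v = matvec C (matvec D v).
Proof.
apply functional_extensionality => i; rewrite /matvec /matmul.
transitivity (rsum (fun j => rsum (fun k => C i k * D k j * v j))).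
  apply rsum_ext => j; rewrite Rmult_comm -rsum_scal; apply rsum_ext => k; ring.
rewrite rsum_swap; apply rsum_ext => k; rewrite -rsum_scal; apply rsum_ext => j; ring.
Qed.

Lemma dotv_transp C v w : dotv (matvec C v) w = dotv v (matvec (transp C) w).
Proof.
rewrite /dotv /matvec /transp.
transitivity (rsum (fun i => rsum (fun k => C i k * v k * w i))).
  apply rsum_ext => i; rewrite Rmult_comm -rsum_scal; apply rsum_ext => k; ring.
rewrite rsum_swap; apply rsum_ext => k; rewrite -rsum_scal; apply rsum_ext => j; ring.
Qed.

Lemma matvec_idm v : matvec (@idm m) v = v.
Proof.
apply functional_extensionality => i; rewrite /matvec /idm.
exact: rsum_ind_mul'.
Qed.

Lemma Qf_sym C v w : symm C -> Qf C v w = Qf C w v.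
Proof.
move=> HC; rewrite /Qf dotv_transp dotv_sym.
have -> : transp C = C by do 2 (apply functional_extensionality => ?); rewrite /transp HC.
done.
Qed.

Lemma Nv_ge0 v : 0 <= Nv v.
Proof. apply rsum_ge0 => i; nra. Qed.

Lemma matvec_sub C D v i : matvec (matsub C D) v i = matvec C v i - matvec D v i.
Proof. rewrite /matvec /matsub -rsum_minus; apply rsum_ext => k; ring. Qed.

Lemma Qf_sub C D v w : Qf (matsub C D) v w = Qf C v w - Qf D v w.
Proof. rewrite /Qf /dotv -rsum_minus; apply rsum_ext => k; rewrite matvec_sub; ring. Qed.

Lemma amgm_psd C v w c : symm C -> (forall z, 0 <= Qf C z z) -> 0 < c ->
  2 * Qf C v w <= c * Qf C v v + Qf C w w / c.
Proof.
move=> HC Hp Hc.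
have H := Hp (lc c v (-1) w).
rewrite /Qf matvec_lc dotv_lcl !dotv_lcr in H.
have E : dotv (matvec C w) v = dotv (matvec C v) w by have := Qf_sym v w HC; rewrite /Qf.
rewrite E in H. rewrite /Qf.
apply (Rmult_le_reg_l c) => //.
have -> : c * (c * dotv (matvec C v) v + dotv (matvec C w) w / c) =
   c * c * dotv (matvec C v) v + dotv (matvec C w) w by field; lra.
nra.
Qed.

Lemma amgm_dot v w c : 0 < c -> 2 * dotv v w <= c * Nv v + Nv w / c.
Proof.
move=> Hc.
have H : 0 <= Nv (lc c v (-1) w) := Nv_ge0 _.
rewrite /Nv dotv_lcl !dotv_lcr (dotv_sym w v) in H. rewrite /Nv.
apply (Rmult_le_reg_l c) => //.
have -> : c * (c * dotv v v + dotv w w / c) = c * c * dotv v v + dotv w w by field; lra.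
nra.
Qed.

Lemma matmul_assoc C D E : matmul C (matmul D E) = matmul (matmul C D) E.
Proof.
apply functional_extensionality => x; apply functional_extensionality => x0; rewrite /matmul.
transitivity (rsum (fun k => rsum (fun l => C x l * D l k * E k x0))).
  rewrite rsum_swap; apply rsum_ext => l; rewrite -rsum_scal; apply rsum_ext => k; ring.
apply rsum_ext => k; rewrite Rmult_comm -rsum_scal; apply rsum_ext => l; ring.
Qed.

Lemma unitv_dot (i : 'I_m) v : dotv v (fun k => if k == i then 1 else 0) = v i.
Proof. exact: rsum_ind_mul. Qed.

Lemma Nv_unit (i : 'I_m) : Nv (fun k => if k == i then 1 else 0) = 1.
Proof. by rewrite /Nv unitv_dot eqxx. Qed.

Lemma matvec_unit C (i : 'I_m) : matvec C (fun k => if k == i then 1 else 0) = fun j => C j i.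
Proof. apply functional_extensionality => j; exact: rsum_ind_mul. Qed.
End Lin.
Lemma Rsup_ub (E : R -> Prop) b r : (forall x, E x -> x <= b) -> E r -> r <= Rsup E.
Proof.
move=> Hb Hr.
have [l Hl] : {l | is_lub E l} by apply completeness; [exists b; exact Hb | exists r; exact Hr].
have Hs : is_lub E (Rsup E) by rewrite /Rsup; apply (epsilon_spec (inhabits 0) (fun l => is_lub E l)); exists l.
exact: (proj1 Hs).
Qed.

Lemma Rsup_le (E : R -> Prop) b : (exists r, E r) -> (forall x, E x -> x <= b) -> Rsup E <= b.
Proof.
move=> [r Hr] Hb.
have [l Hl] : {l | is_lub E l} by apply completeness; [exists b; exact Hb | exists r; exact Hr].
have Hs : is_lub E (Rsup E) by rewrite /Rsup; apply (epsilon_spec (inhabits 0) (fun l => is_lub E l)); exists l.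
exact: (proj2 Hs).
Qed.

Section Op.
Variable m : nat.
Implicit Types (v w : vec m) (C E : mat m).

Lemma Nv_pos_or v : (forall k, v k = 0) \/ 0 < Nv v.
Proof.
case: (classic (exists k, v k <> 0)) => [[k Hk]|H]; [right|left].
  apply rsum_pos_ex; [move=> i; nra| exists k; nra].
move=> k; apply NNPP => Hk; apply H; by exists k.
Qed.

Lemma vnorm_Nv v : vnorm v = 1 -> Nv v = 1.
Proof.
rewrite /vnorm /Nv => H. have H0 := Nv_ge0 v. rewrite /Nv in H0.
rewrite -(sqrt_sqrt (dotv v v)) // H; ring.
Qed.

Lemma row_bound C v i : Nv v = 1 -> (matvec C v i) ^ 2 <= ((Nv (fun k => C i k) + 1) / 2) ^ 2.
Proof.
move=> Hv.
have H1 := amgm_dot (fun k => C i k) v Rlt_0_1.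
have H2 := amgm_dot (lc (-1) (fun k => C i k) 0 (fun k => C i k)) v Rlt_0_1.
have E1 : dotv (fun k => C i k) v = matvec C v i by apply rsum_ext.
rewrite dotv_lcl E1 in H2. rewrite E1 in H1.
have E2 : Nv (lc (-1) (fun k => C i k) 0 (fun k => C i k)) = Nv (fun k => C i k).
  rewrite /Nv dotv_lcl !dotv_lcr; ring.
rewrite E2 Hv in H2. rewrite Hv in H1.
have H0 := Nv_ge0 (fun k => C i k).
nra.
Qed.

Lemma opnorm_set_bound C v : vnorm v = 1 ->
  vnorm (matvec C v) <= sqrt (rsum (fun i => ((Nv (fun k => C i k) + 1) / 2) ^ 2)).
Proof.
move=> Hv; apply sqrt_le_1_alt. apply rsum_le => i.
have := row_bound C i (vnorm_Nv Hv). lra.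
Qed.

Lemma opnorm_bound C e : 0 < e -> opnorm C < e -> forall v, Nv (matvec C v) <= e ^ 2 * Nv v.
Proof.
move=> He Ho v.
case: (Nv_pos_or v) => [H0|Hp].
  have Z : forall f : 'I_m -> R, (forall k, f k = 0) -> rsum f = 0.
    move=> f Hf; transitivity (rsum (fun _ : 'I_m => 0)); [exact: rsum_ext| rewrite rsum_const; ring].
  have -> : matvec C v = fun _ => 0.
    apply functional_extensionality => i; apply Z => k; rewrite H0; ring.
  have -> : Nv v = 0 by apply Z => k; rewrite H0; ring.
  rewrite /Nv /dotv Z; [nra| move=> k; ring].
set c := / sqrt (Nv v).
have Hs : 0 < sqrt (Nv v) by apply sqrt_lt_R0.
have Hc : 0 < c by apply Rinv_0_lt_compat.
have Hss : sqrt (Nv v) * sqrt (Nv v) = Nv v by apply sqrt_sqrt; lra.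
have Hcc : c * c * Nv v = 1 by rewrite /c; rewrite -[X in _ * X = 1]Hss; field; lra.
set w := lc c v 0 v.
have Nw : Nv w = 1 by rewrite /Nv /w dotv_lcl !dotv_lcr -/(Nv v); lra.
have vw : vnorm w = 1 by rewrite /vnorm -/(Nv w) Nw sqrt_1.
have Cw : matvec C w = lc c (matvec C v) 0 (matvec C v) by rewrite /w matvec_lc.
have NCw : Nv (matvec C w) = c * c * Nv (matvec C v) by rewrite Cw /Nv dotv_lcl !dotv_lcr; ring.
have Hle : vnorm (matvec C w) <= opnorm C.
  rewrite /opnorm; apply (Rsup_ub (b := sqrt (rsum (fun i => ((Nv (fun k => C i k) + 1) / 2) ^ 2)))).
    move=> x [v' [Hv' ->]]; exact: opnorm_set_bound.
  by exists w.
have Hn0 : 0 <= vnorm (matvec C w) by apply sqrt_pos.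
have : Nv (matvec C w) <= e ^ 2.
  rewrite /vnorm -/(Nv (matvec C w)) in Hle Hn0.
  rewrite -(sqrt_sqrt (Nv (matvec C w))); [|exact: Nv_ge0]. nra.
rewrite NCw => H.
have Hnv := Nv_ge0 (matvec C v).
have -> : Nv (matvec C v) = (c * c * Nv (matvec C v)) * Nv v.
  rewrite -[in LHS](Rmult_1_l (Nv (matvec C v))) -Hcc; ring.
apply Rmult_le_compat_r; [lra| exact H].
Qed.

Lemma bil_bound E e v w : 0 < e -> (forall v, Nv (matvec E v) <= e ^ 2 * Nv v) ->
  Rabs (dotv (matvec E v) w) <= e * (Nv v + Nv w) / 2.
Proof.
move=> He HE.
have Hc : 0 < / e by apply Rinv_0_lt_compat.
have H1 := amgm_dot (matvec E v) w Hc.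
have H2 := amgm_dot (matvec E v) (lc (-1) w 0 w) Hc.
rewrite dotv_lcr in H2.
have E2 : Nv (lc (-1) w 0 w) = Nv w by rewrite /Nv dotv_lcl !dotv_lcr; ring.
rewrite E2 in H2.
have H3 := HE v.
have H4 : / e * Nv (matvec E v) <= e * Nv v.
  apply (Rmult_le_reg_l e) => //. rewrite -Rmult_assoc Rinv_r; [|lra]. nra.
have H5 : Nv w / / e = e * Nv w by field; lra.
rewrite H5 in H1 H2.
apply Rabs_le; lra.
Qed.

Lemma opnorm_unif (i0 : 'I_m) C c : 0 <= c -> (forall i k, Rabs (C i k) <= c) ->
  opnorm C <= sqrt (INR m * ((INR m * c ^ 2 + 1) / 2) ^ 2).
Proof.
move=> Hc HC. rewrite /opnorm.
have Hv0 : vnorm (fun k : 'I_m => if k == i0 then 1 else 0) = 1 by rewrite /vnorm -/(Nv _) Nv_unit sqrt_1.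
apply Rsup_le; first by eexists; exists (fun k : 'I_m => if k == i0 then 1 else 0).
move=> x [v [Hv ->]].
apply: Rle_trans; first exact: opnorm_set_bound.
apply sqrt_le_1_alt. rewrite -rsum_const. apply rsum_le => i.
have Hr : Nv (fun k => C i k) <= INR m * c ^ 2.
  rewrite -rsum_const; apply rsum_le => k. have H1 := HC i k.
  have H2 := Rabs_pos (C i k). have H3 := Rsqr_abs (C i k). rewrite /Rsqr in H3.
  rewrite H3 /=. nra.
have := Nv_ge0 (fun k => C i k). nra.
Qed.
End Op.
Lemma J_anti n (i k : 'I_(2 * n)) : @Jmat n i k = - @Jmat n k i.
Proof.
have Li := ltn_ord i; have Lk := ltn_ord k.
rewrite /Jmat.
case: (ltnP i n) => Hi; case: (ltnP k n) => Hk /=;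
case: eqP => E1; case: eqP => E2 /=; try lra; try lia.
Qed.

Lemma dotv_anti m (C : mat m) v : (forall i k, C i k = - C k i) -> dotv (matvec C v) v = 0.
Proof.
move=> HC.
have E : dotv (matvec C v) v = - dotv (matvec C v) v.
  rewrite {1}/dotv /matvec.
  transitivity (rsum (fun i => rsum (fun k => C i k * v k * v i))).
    apply rsum_ext => i; rewrite Rmult_comm -rsum_scal; apply rsum_ext => k; ring.
  rewrite rsum_swap /dotv /matvec -rsum_opp. apply rsum_ext => k.
  rewrite Rmult_comm -rsum_scal -rsum_opp; apply rsum_ext => i; rewrite HC; ring.
lra.
Qed.

Lemma dotv_J n (v : vec (2 * n)) : dotv (matvec (@Jmat n) v) v = 0.
Proof. apply dotv_anti => i k; exact: J_anti. Qed.

Lemma Hdist_refl n (z : pt n) : Hdist z z = 0.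
Proof.
rewrite /Hdist /rho /Hmul /Hinv /=.
have -> : (fun i => - z.1 i + z.1 i) = (fun _ => 0) by apply functional_extensionality => i; ring.
have -> : matvec (@Jmat n) (fun i => - z.1 i) = fun i => - matvec (@Jmat n) z.1 i.
  apply functional_extensionality => i; rewrite /matvec -rsum_opp; apply rsum_ext => k; ring.
have -> : dotv (fun i => - matvec (@Jmat n) z.1 i) z.1 = - dotv (matvec (@Jmat n) z.1) z.1.
  rewrite /dotv -rsum_opp; apply rsum_ext => k; ring.
rewrite dotv_J.
have -> : dotv (fun _ : 'I_(2 * n) => 0) (fun _ => 0) = 0.
  rewrite /dotv (@rsum_ext _ _ (fun _ => 0)); [rewrite rsum_const; ring| move=> ?; ring].
have -> : 0 ^ 2 + (- z.2 + z.2 + 2 * - 0) ^ 2 = 0 by ring.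
by rewrite sqrt_0 sqrt_0.
Qed.
Lemma lim_deriv_is f x l : is_derive f x l -> lim_deriv f x = l.
Proof.
move=> H. have H' := proj1 (is_derive_Reals f x l) H.
rewrite /lim_deriv.
have Hs : derivable_pt_lim f x (epsilon (inhabits 0) (fun l => derivable_pt_lim f x l)).
  by apply (epsilon_spec (inhabits 0) (fun l => derivable_pt_lim f x l)); exists l.
exact: (uniqueness_limite f x _ _ Hs H').
Qed.

Lemma lim_deriv_loc f h x l : locally x (fun s => h s = f s) -> is_derive h x l -> lim_deriv f x = l.
Proof. move=> Hl Hd; apply lim_deriv_is; exact: (is_derive_ext_loc h f x l Hl Hd). Qed.

Lemma loc_pos (p : R -> R) x : continuous p x -> 0 < p x -> locally x (fun s => 0 < p s).
Proof.
move=> Hc Hp.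
apply Hc. exists (mkposreal _ Hp) => y Hy /=.
have := Hy. rewrite /ball /= /AbsRing_ball /abs /minus /plus /opp /=. move=> H.
have := proj1 (Rabs_lt_between' y (p x) (p x)) H. lra.
Qed.

Lemma deriv_F (phi P : R -> R) phi' P' c : is_derive phi 0 phi' -> is_derive P 0 P' -> 0 < phi 0 ->
  is_derive (fun s => Rpower (phi s) c / phi s * P s) 0
    (Rpower (phi 0) c / phi 0 * ((c - 1) * phi' / phi 0 * P 0 + P')).
Proof.
move=> H1 H2 H3. rewrite /Rpower.
have E1 : ex_derive phi 0 by exists phi'.
have E2 : ex_derive P 0 by exists P'.
auto_derive; first by repeat split => //; lra.
rewrite (is_derive_unique phi 0 phi' H1) (is_derive_unique P 0 P' H2).
field; lra.
Qed.

Lemma deriv_G (phi : R -> R) phi' k c : is_derive phi 0 phi' -> 0 < phi 0 ->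
  is_derive (fun s => k * Rpower (phi s) c) 0 (k * c * Rpower (phi 0) c * phi' / phi 0).
Proof.
move=> H1 H3. rewrite /Rpower.
have E1 : ex_derive phi 0 by exists phi'.
auto_derive; first by repeat split => //; lra.
rewrite (is_derive_unique phi 0 phi' H1).
field; lra.
Qed.
Definition uvec m (i : 'I_m) : vec m := fun k => if k == i then 1 else 0.
Definition uf n (B : mat (2 * n)) (z : pt n) := dotv (matvec B z.1) z.1.
Definition phif n (B : mat (2 * n)) (z : pt n) := uf B z ^ 2 + z.2 ^ 2.
Definition Pv n (B : mat (2 * n)) (z : pt n) : vec (2 * n) :=
  lc (4 * uf B z) (matvec B z.1) (4 * z.2) (matvec (@Jmat n) z.1).
Definition Fj n (B : mat (2 * n)) c (j : 'I_(2 * n)) (z : pt n) :=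
  Rpower (phif B z) c / phif B z * Pv B z j.

Section Lines.
Variable n : nat.
Variable B : mat (2 * n).
Hypothesis Bsym : symm B.
Implicit Types (z : pt n) (i j : 'I_(2 * n)).

Lemma shx_fst z i s : (shift_x z i s).1 = lc 1 z.1 s (uvec i).
Proof.
apply functional_extensionality => k; rewrite /shift_x /lc /uvec /=.
case: (k == i); ring.
Qed.

Lemma L1 (C : mat (2 * n)) z i s j : matvec C (shift_x z i s).1 j = matvec C z.1 j + s * C j i.
Proof. by rewrite shx_fst matvec_lc /uvec matvec_unit /lc Rmult_1_l. Qed.

Lemma L2 z i s : uf B (shift_x z i s) = uf B z + 2 * s * matvec B z.1 i + s ^ 2 * B i i.
Proof.
rewrite /uf shx_fst matvec_lc dotv_lcl !dotv_lcr /uvec matvec_unit !unitv_dot.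
have -> : dotv (fun j => B j i) z.1 = matvec B z.1 i.
  rewrite /dotv /matvec; apply rsum_ext => k; rewrite Bsym; ring.
ring.
Qed.

Lemma shx0 z i : shift_x z i 0 = z.
Proof.
case: z => x t; rewrite /shift_x /=; f_equal.
apply functional_extensionality => k; case: (k == i); ring.
Qed.

Lemma sht0 z : shift_t z 0 = z.
Proof. case: z => x t; rewrite /shift_t /=; f_equal; ring. Qed.

Lemma phi_x_eq z i : (fun s => phif B (shift_x z i s)) =
  (fun s => (uf B z + 2 * s * matvec B z.1 i + s ^ 2 * B i i) ^ 2 + z.2 ^ 2).
Proof. apply functional_extensionality => s; by rewrite /phif L2. Qed.

Lemma phi_x_deriv z i : is_derive (fun s => phif B (shift_x z i s)) 0 (4 * uf B z * matvec B z.1 i).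
Proof. rewrite phi_x_eq; auto_derive => //; ring. Qed.

Lemma phi_t_deriv z : is_derive (fun s => phif B (shift_t z s)) 0 (2 * z.2).
Proof.
have -> : (fun s => phif B (shift_t z s)) = (fun s => uf B z ^ 2 + (z.2 + s) ^ 2) by [].
auto_derive => //; ring.
Qed.

Lemma P_x_deriv z i j : is_derive (fun s => Pv B (shift_x z i s) j) 0
  (8 * matvec B z.1 i * matvec B z.1 j + 4 * uf B z * B j i + 4 * z.2 * @Jmat n j i).
Proof.
have -> : (fun s => Pv B (shift_x z i s) j) = (fun s =>
   4 * (uf B z + 2 * s * matvec B z.1 i + s ^ 2 * B i i) * (matvec B z.1 j + s * B j i)
   + 4 * z.2 * (matvec (@Jmat n) z.1 j + s * @Jmat n j i)).
  apply functional_extensionality => s. by rewrite /Pv /lc L2 !L1.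
auto_derive => //; ring.
Qed.

Lemma P_t_deriv z j : is_derive (fun s => Pv B (shift_t z s) j) 0 (4 * matvec (@Jmat n) z.1 j).
Proof.
have -> : (fun s => Pv B (shift_t z s) j) = (fun s =>
   4 * uf B z * matvec B z.1 j + 4 * (z.2 + s) * matvec (@Jmat n) z.1 j) by [].
auto_derive => //; ring.
Qed.
End Lines.
Section Hess.
Variable n : nat.
Variable B : mat (2 * n).
Hypothesis Bsym : symm B.
Variables k c : R.
Hypothesis Hkc : k * c = 1.
Let gg := fun w : pt n => k * Rpower (phif B w) c.
Implicit Types (z : pt n) (i j : 'I_(2 * n)).

Lemma Xg z j : 0 < phif B z -> Xf j gg z = Fj B c j z.
Proof.
move=> Hp.
have H1 : is_derive (fun s => k * Rpower (phif B (shift_x z j s)) c) 0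
    (k * c * Rpower (phif B z) c * (4 * uf B z * matvec B z.1 j) / phif B z).
  have := deriv_G k c (phi_x_deriv Bsym z j). by rewrite /= shx0; apply.
have H2 : is_derive (fun s => k * Rpower (phif B (shift_t z s)) c) 0
    (k * c * Rpower (phif B z) c * (2 * z.2) / phif B z).
  have := deriv_G k c (phi_t_deriv B z). by rewrite /= sht0; apply.
rewrite /Xf /Defs.Dx /Dt /gg; cbv beta. rewrite (lim_deriv_is H1) (lim_deriv_is H2) Hkc /Fj /Pv /lc.
field; lra.
Qed.

Lemma loc_phi_x z i : 0 < phif B z -> locally 0 (fun s => 0 < phif B (shift_x z i s)).
Proof.
move=> Hp; apply (loc_pos (p := fun s => phif B (shift_x z i s))); last by rewrite /= shx0.
apply: (@ex_derive_continuous R_AbsRing R_NormedModule (fun s => phif B (shift_x z i s)) 0); eexists; exact: phi_x_deriv.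
Qed.

Lemma loc_phi_t z : 0 < phif B z -> locally 0 (fun s => 0 < phif B (shift_t z s)).
Proof.
move=> Hp; apply (loc_pos (p := fun s => phif B (shift_t z s))); last by rewrite /= sht0.
apply: (@ex_derive_continuous R_AbsRing R_NormedModule (fun s => phif B (shift_t z s)) 0); eexists; exact: phi_t_deriv.
Qed.

Lemma XXg z i j : 0 < phif B z ->
  Xf i (Xf j gg) z = Rpower (phif B z) c / phif B z *
   ((c - 1) * Pv B z i * Pv B z j / phif B z +
    (8 * matvec B z.1 i * matvec B z.1 j + 4 * uf B z * B j i + 4 * z.2 * @Jmat n j i
     + 8 * matvec (@Jmat n) z.1 i * matvec (@Jmat n) z.1 j)).
Proof.
move=> Hp.
have H1 : lim_deriv (fun s => Xf j gg (shift_x z i s)) 0 =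
   Rpower (phif B z) c / phif B z * ((c - 1) * (4 * uf B z * matvec B z.1 i) / phif B z * Pv B z j
     + (8 * matvec B z.1 i * matvec B z.1 j + 4 * uf B z * B j i + 4 * z.2 * @Jmat n j i)).
  apply (lim_deriv_loc (h := fun s => Fj B c j (shift_x z i s))).
    move: (loc_phi_x i Hp); apply filter_imp => s Hs; by rewrite Xg.
  have := deriv_F c (phi_x_deriv Bsym z i) (P_x_deriv Bsym z i j).
  rewrite /= shx0 => H; apply H => //.
have H2 : lim_deriv (fun s => Xf j gg (shift_t z s)) 0 =
   Rpower (phif B z) c / phif B z * ((c - 1) * (2 * z.2) / phif B z * Pv B z j
     + 4 * matvec (@Jmat n) z.1 j).
  apply (lim_deriv_loc (h := fun s => Fj B c j (shift_t z s))).
    move: (loc_phi_t Hp); apply filter_imp => s Hs; by rewrite Xg.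
  have := deriv_F c (phi_t_deriv B z) (P_t_deriv B z j).
  rewrite /= sht0 => H; apply H => //.
rewrite /Xf /Defs.Dx /Dt H1 H2 /Pv /lc.
field; lra.
Qed.

Lemma Hess_formula z i j : 0 < phif B z ->
  HessH gg z i j = Rpower (phif B z) c / phif B z *
   ((c - 1) * Pv B z i * Pv B z j / phif B z +
    (8 * matvec B z.1 i * matvec B z.1 j + 4 * uf B z * B i j
     + 8 * matvec (@Jmat n) z.1 i * matvec (@Jmat n) z.1 j)).
Proof.
move=> Hp. rewrite /HessH !XXg // (J_anti j i) (Bsym j i).
field; lra.
Qed.
End Hess.
Lemma abs_prod_lb x y b : 0 <= x -> Rabs y <= b -> - (x * b) <= x * y.
Proof. move=> Hx Hy. have := proj1 (Rabs_le_between y b) Hy. nra. Qed.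

Lemma final_arith u t a1 a2 a2' a3 tau e L T al de n' :
  0 <= u -> 0 < u ^ 2 + t ^ 2 -> 0 < e -> 0 <= L -> 0 <= T -> 0 < al -> 16 * al = 8 * n' + 16 * de ->
  Rabs a1 <= e * L * u -> Rabs a2 <= e * L * u -> Rabs a2' <= e * L * u -> Rabs a3 <= e * L * u ->
  Rabs tau <= e * T -> e * (32 * (al + 1) * L + 16 * L + 4 * T) <= 16 * de ->
  0 <= (al + 1) * (16 * (u ^ 2 * (u + a1) + u * t * (0 + a2) + t * u * (0 + a2') + t ^ 2 * (u + a3))) / (u ^ 2 + t ^ 2)
       - (8 * (u + a1) + 4 * u * (2 * n' + tau) + 8 * (u + a3)).
Proof.
move=> Hu Hp He HL HT Hal Hal2 H1 H2 H2' H3 Ht Hc.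
set ph := u ^ 2 + t ^ 2.
have Hb := Rmult_le_pos _ _ (Rmult_le_pos _ _ (Rlt_le _ _ He) HL) Hu.
have S1 : - (u ^ 2 * (e * L * u)) <= u ^ 2 * a1 by apply abs_prod_lb => //; nra.
have S3 : - (t ^ 2 * (e * L * u)) <= t ^ 2 * a3 by apply abs_prod_lb => //; nra.
have S2b : - (ph * (e * L * u)) <= u * t * (a2 + a2').
  have Hs : Rabs (a2 + a2') <= 2 * (e * L * u).
    apply: Rle_trans; first exact: Rabs_triang. lra.
  have Hut : Rabs (u * t) <= ph / 2.
    rewrite /ph. have := pow2_ge_0 (u + t); have := pow2_ge_0 (u - t). move=> ? ?. apply Rabs_le; split; nra.
  have := Rabs_pos (u * t). have := Rabs_pos (a2 + a2').
  have Hm : Rabs (u * t * (a2 + a2')) <= ph / 2 * (2 * (e * L * u)).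
    rewrite Rabs_mult. apply Rmult_le_compat => //; apply Rabs_pos.
  have := proj1 (Rabs_le_between (u * t * (a2 + a2')) _) Hm. lra.
have Stau : - (4 * u * (e * T)) <= 4 * u * tau.
  apply abs_prod_lb => //; lra.
have Stau2 : - (4 * u * (e * T)) <= 4 * u * (- tau).
  apply abs_prod_lb; [lra| by rewrite Rabs_Ropp].
have Ha1 := proj1 (Rabs_le_between a1 _) H1. have Ha3 := proj1 (Rabs_le_between a3 _) H3.
have Hph : 0 < ph by [].
apply (Rmult_le_reg_r ph) => //. rewrite Rmult_0_l.
have -> : ((al + 1) * (16 * (u ^ 2 * (u + a1) + u * t * (0 + a2) + t * u * (0 + a2') + t ^ 2 * (u + a3))) / ph -
   (8 * (u + a1) + 4 * u * (2 * n' + tau) + 8 * (u + a3))) * ph =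
   16 * de * u * ph + 16 * (al + 1) * (u ^ 2 * a1 + u * t * (a2 + a2') + t ^ 2 * a3)
   - ph * (8 * a1 + 4 * u * tau + 8 * a3).
  rewrite (_ : al = n' / 2 + de); [|lra]. rewrite /ph; field; lra.
have HS : - (2 * ph * (e * L * u)) <= u ^ 2 * a1 + u * t * (a2 + a2') + t ^ 2 * a3.
  have : ph * (e * L * u) = u ^ 2 * (e * L * u) + t ^ 2 * (e * L * u) by rewrite /ph; ring.
  lra.
have HR : 8 * a1 + 4 * u * tau + 8 * a3 <= 16 * (e * L * u) + 4 * u * (e * T) by lra.
have HeU : 0 <= e * u * (32 * (al + 1) * L + 16 * L + 4 * T) <= 16 * de * u.
  split; [apply Rmult_le_pos; nra| nra].
have Hal1 : 0 < al + 1 by lra.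
have P1 : 16 * (al + 1) * (u ^ 2 * a1 + u * t * (a2 + a2') + t ^ 2 * a3) >= - (32 * (al + 1) * ph * (e * L * u)) by nra.
have P2 : ph * (8 * a1 + 4 * u * tau + 8 * a3) <= ph * (16 * (e * L * u) + 4 * u * (e * T)) by apply Rmult_le_compat_l; lra.
have P3 : ph * (e * u * (32 * (al + 1) * L + 16 * L + 4 * T)) <= ph * (16 * de * u) by apply Rmult_le_compat_l; lra.
nra.
Qed.
Lemma matmul_idm_r m (C : mat m) : matmul C (@idm m) = C.
Proof.
apply functional_extensionality => i; apply functional_extensionality => j.
rewrite /matmul /idm. exact: (rsum_ind_mul j (fun k => C i k)).
Qed.

Lemma matmul_idm_l m (C : mat m) : matmul (@idm m) C = C.
Proof.
apply functional_extensionality => i; apply functional_extensionality => j.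
rewrite /matmul /idm. exact: (rsum_ind_mul' i (fun k => C k j)).
Qed.

Lemma trace_sub m (C D E : mat m) : trace (matmul (matsub C D) E) = trace (matmul C E) - trace (matmul D E).
Proof.
rewrite /trace /matmul -rsum_minus; apply rsum_ext => i; rewrite -rsum_minus; apply rsum_ext => k.
rewrite /matsub; ring.
Qed.

Lemma trace_idm m : trace (@idm m) = INR m.
Proof.
rewrite /trace /idm (@rsum_ext _ _ (fun _ => 1)); [rewrite rsum_const; ring| move=> i; by rewrite eqxx].
Qed.

Lemma rsum_abs_le m (f b : 'I_m -> R) : (forall i, Rabs (f i) <= b i) -> Rabs (rsum f) <= rsum b.
Proof.
move=> H. apply Rabs_le; split.
  rewrite -rsum_opp; apply rsum_le => i; have := proj1 (Rabs_le_between _ _) (H i); lra.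
apply rsum_le => i; have := proj1 (Rabs_le_between _ _) (H i); lra.
Qed.

Lemma Qf_lc m (C : mat m) a v b w :
  Qf C (lc a v b w) (lc a v b w) = a * (a * Qf C v v + b * Qf C v w) + b * (a * Qf C w v + b * Qf C w w).
Proof. by rewrite /Qf matvec_lc dotv_lcl !dotv_lcr. Qed.

Lemma Qf_split m (A M : mat m) v w : Qf A v w = Qf M v w + Qf (matsub A M) v w.
Proof. rewrite Qf_sub; ring. Qed.

Lemma trace_formula m (A B : mat m) (H : mat m) (bx jx P : vec m) a1 a2 a3 a4 :
  (forall k i, H k i = a1 * (P k * P i) + a2 * (bx k * bx i) + a3 * B k i + a4 * (jx k * jx i)) ->
  trace (matmul A H) = a1 * Qf A P P + a2 * Qf A bx bx + a3 * trace (matmul A B) + a4 * Qf A jx jx.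
Proof.
move=> HH. rewrite /trace /matmul /Qf /dotv /matvec.
rewrite -!rsum_scal -!rsum_plus; apply rsum_ext => i.
rewrite (@rsum_ext _ _ (fun k => a1 * (A i k * P k * P i) + a2 * (A i k * bx k * bx i) + a3 * (A i k * B k i)
   + a4 * (A i k * jx k * jx i))); last by move=> k; rewrite HH; ring.
rewrite !rsum_plus !rsum_scal.
have E : forall f : vec m, rsum (fun k => A i k * f k * f i) = rsum (fun k => A i k * f k) * f i.
  move=> f; rewrite Rmult_comm -rsum_scal; apply rsum_ext => k; ring.
rewrite !E; ring.
Qed.

Definition Lc (lam Lam : R) := Lam / lam ^ 2 + 1 / lam.
Definition Tc (n : nat) (lam : R) := INR n * (1 / lam ^ 2 + 1).
Definition c0 (n : nat) (delta lam Lam : R) :=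
  16 * delta / (32 * (alpha n delta + 1) * Lc lam Lam + 16 * Lc lam Lam + 4 * Tc n lam + 1).

Lemma alpha_eq n delta : 16 * alpha n delta = 8 * INR n + 16 * delta.
Proof. rewrite /alpha /Qdim plus_INR mult_INR /=. field. Qed.

Section Key.
Variables (n : nat) (delta lam Lam : R) (M A : mat (2 * n)) (e : R) (zeta : pt n).
Hypotheses (Hd : 0 < delta) (Hl : 0 < lam) (HL : 0 < Lam).
Hypothesis Msym : symm M.
Hypothesis Mb : forall v : vec (2 * n), lam * dotv v v <= dotv (matvec M v) v <= Lam * dotv v v.
Hypothesis Msp : symplectic M.
Hypothesis He : 0 < e.
Hypothesis HE : forall v, Nv (matvec (matsub A M) v) <= e ^ 2 * Nv v.
Hypothesis Hc : e * (32 * (alpha n delta + 1) * Lc lam Lam + 16 * Lc lam Lam + 4 * Tc n lam) <= 16 * delta.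
Hypothesis Hz : zeta <> @origin n.

Let J := @Jmat n.
Let B := invm M.
Let N0 := matmul (transp J) (matmul M J).

Lemma HB : matmul M B = @idm (2 * n) /\ matmul B M = @idm (2 * n).
Proof.
rewrite /B /invm. apply (epsilon_spec (inhabits (@idm (2 * n))) (fun C => matmul M C = @idm (2 * n) /\ matmul C M = @idm (2 * n))).
exists N0. exact Msp.
Qed.

Lemma BN0 : B = N0.
Proof.
have [H1 H2] := HB. have [H3 H4] := Msp.
rewrite -(matmul_idm_r B) -[in LHS]H3 matmul_assoc H2 matmul_idm_l //.
Qed.

Lemma Bsym : symm B.
Proof.
move=> i j. rewrite BN0 /N0 /matmul /transp.
transitivity (rsum (fun k => rsum (fun l => J k i * M k l * J l j))).
  apply rsum_ext => k; rewrite -rsum_scal; apply rsum_ext => l; ring.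
rewrite rsum_swap. apply rsum_ext => l; rewrite -rsum_scal; apply rsum_ext => k; rewrite (Msym k l); ring.
Qed.

Lemma Mpsd : forall v, 0 <= Qf M v v.
Proof. move=> v; have := Mb v; have := Nv_ge0 v; rewrite /Nv /Qf; nra. Qed.

Lemma NB_bound v : lam ^ 2 * Nv (matvec B v) <= Nv v.
Proof.
have [H1 _] := HB.
have Q1 : Qf M (matvec B v) (matvec B v) = dotv (matvec B v) v.
  by rewrite /Qf -matvec_matmul H1 matvec_idm dotv_sym.
have := Mb (matvec B v). rewrite -/(Qf M _ _) Q1 => -[H2 _].
have := amgm_dot (matvec B v) v Hl. rewrite /Nv in H2 *.
have := Nv_ge0 v. have := Nv_ge0 (matvec B v). rewrite /Nv => ? ? ?.
have : lam * dotv (matvec B v) (matvec B v) <= dotv v v / lam by lra.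
move=> H. apply (Rmult_le_reg_r (/ lam)); [by apply Rinv_0_lt_compat|].
have -> : lam ^ 2 * dotv (matvec B v) (matvec B v) * / lam = lam * dotv (matvec B v) (matvec B v) by field; lra.
exact H.
Qed.

Lemma trace_bound : Rabs (trace (matmul (matsub A M) B)) <= e * Tc n lam.
Proof.
set E := matsub A M.
have Et : trace (matmul E B) = rsum (fun i => dotv (matvec E (matvec B (uvec i))) (uvec i)).
  rewrite /trace; apply rsum_ext => i. rewrite /uvec matvec_unit unitv_dot /matmul /matvec //.
rewrite Et.
apply: Rle_trans; first apply (rsum_abs_le (b := fun _ => e * (1 / lam ^ 2 + 1) / 2)).
  move=> i. apply: Rle_trans; first exact: (bil_bound _ _ He HE).
  have H1 := NB_bound (uvec i). rewrite /uvec Nv_unit in H1 *.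
  have Hn : Nv (matvec B (fun k => if k == i then 1 else 0)) <= 1 / lam ^ 2.
    apply (Rmult_le_reg_l (lam ^ 2)); [nra|]. have -> : lam ^ 2 * (1 / lam ^ 2) = 1 by field; lra. exact H1.
  have := Nv_ge0 (matvec B (fun k => if k == i then 1 else 0)). nra.
rewrite rsum_const /Tc mult_INR /=. lra.
Qed.

Lemma key : 0 <= - trace (matmul A (HessH (gfun delta M) zeta)).
Proof.
have [HB1 HB2] := HB.
set x := zeta.1. set t := zeta.2.
set bx := matvec B x. set jx := matvec J x.
set u := uf B zeta.
have Hu : u = dotv bx x by [].
have Hal := alpha_eq n delta.
have Hn0 := pos_INR n.
have Hapos : 0 < alpha n delta by lra.
have MBx : matvec M bx = x by rewrite /bx -matvec_matmul HB1 matvec_idm.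
have Qbb : Qf M bx bx = u by rewrite /Qf MBx dotv_sym.
have Qjj : Qf M jx jx = u.
  rewrite /Qf /u /uf BN0 /N0 !matvec_matmul -/x [in RHS]dotv_sym -dotv_transp -/jx dotv_sym //.
have Qbj : Qf M bx jx = 0 by rewrite /Qf MBx dotv_sym /jx dotv_J.
have Qjb : Qf M jx bx = 0 by rewrite Qf_sym.
have trMB : trace (matmul M B) = 2 * INR n by rewrite HB1 trace_idm mult_INR.
have Hbx0 := Nv_ge0 bx. have Hjx0 := Nv_ge0 jx. have Hx0 := Nv_ge0 x.
have Hu0 : lam * Nv bx <= u by have := Mb bx; rewrite -Qbb /Qf /Nv; lra.
have Hju : lam * Nv jx <= u by have := Mb jx; rewrite -Qjj /Qf /Nv; lra.
have Hupos : 0 <= u by nra.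
have HxU : Nv x <= Lam * u.
  have H := amgm_psd bx x Msym Mpsd HL.
  have E1 : Qf M bx x = Nv x by rewrite /Qf MBx.
  have := Mb x. rewrite -/(Qf M x x) -/(Nv x) E1 Qbb in H * => -[_ H2].
  have : Qf M x x / Lam <= Nv x by apply (Rmult_le_reg_l Lam) => //; field_simplify; lra.
  lra.
have HbxL : Nv bx <= Lam / lam ^ 2 * u.
  have := NB_bound x. rewrite -/bx => H.
  apply (Rmult_le_reg_l (lam ^ 2)); [nra|]. have -> : lam ^ 2 * (Lam / lam ^ 2 * u) = Lam * u by field; lra. lra.
have HjxL : Nv jx <= 1 / lam * u.
  apply (Rmult_le_reg_l lam) => //. have -> : lam * (1 / lam * u) = u by field; lra. lra.
have HLu : Nv bx + Nv jx <= Lc lam Lam * u by rewrite /Lc; lra.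
have HLu0 : 0 <= Lc lam Lam by rewrite /Lc; apply Rplus_le_le_0_compat; [apply Rdiv_le_0_compat; nra | apply Rdiv_le_0_compat; lra].
have Hphi : 0 < phif B zeta.
  rewrite /phif -/u -/t.
  case: (Req_dec t 0) => Ht.
    case: (Nv_pos_or x) => [H0|Hp].
      exfalso; apply Hz. rewrite (surjective_pairing zeta) /origin; f_equal.
        apply functional_extensionality => k; exact: H0 k.
      exact Ht.
    have : 0 < u by nra.
    rewrite Ht. nra.
  have := pow2_ge_0 u. have : 0 < t ^ 2 by apply pow2_gt_0. lra.
set al := alpha n delta.
set ph := phif B zeta.
have Hapos' : 0 < al := Hapos. have Hal' : 16 * al = 8 * INR n + 16 * delta := Hal.
have Hphi' : 0 < ph := Hphi.
have Eph : ph = u ^ 2 + t ^ 2 by [].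
have Hkc : - (1 / al) * - al = 1 by field; lra.
set K := Rpower ph (- al) / ph.
have HK : 0 < K by rewrite /K /Rpower; apply Rdiv_lt_0_compat => //; apply exp_pos.
set P := Pv B zeta.
have HH : forall k i, HessH (gfun delta M) zeta k i =
   (K * (- al - 1) / ph) * (P k * P i) + (8 * K) * (bx k * bx i) + (4 * u * K) * B k i + (8 * K) * (jx k * jx i).
  move=> k i.
  transitivity (HessH (fun w => - (1 / al) * Rpower (phif B w) (- al)) zeta k i); first by [].
  rewrite (Hess_formula Bsym Hkc k i Hphi) -/ph -/P -/K -/u -/x -/J -/bx -/jx.
  field. lra.
rewrite (trace_formula A HH).
have -> : trace (matmul A B) = trace (matmul M B) + trace (matmul (matsub A M) B) by rewrite trace_sub; ring.
rewrite /P /Pv Qf_lc !(Qf_split A M) -/u -/x -/bx -/jx -/t Qbb Qjj Qbj Qjb trMB.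
set a1 := Qf (matsub A M) bx bx.
set a2 := Qf (matsub A M) bx jx.
set a2' := Qf (matsub A M) jx bx.
set a3 := Qf (matsub A M) jx jx.
set tau := trace (matmul (matsub A M) B).
have Htau : Rabs tau <= e * Tc n lam := trace_bound.
have B1 := bil_bound bx bx He HE. have B2 := bil_bound bx jx He HE.
have B2' := bil_bound jx bx He HE. have B3 := bil_bound jx jx He HE.
rewrite -/(Qf _ _ _) -/a1 in B1. rewrite -/(Qf _ _ _) -/a2 in B2.
rewrite -/(Qf _ _ _) -/a2' in B2'. rewrite -/(Qf _ _ _) -/a3 in B3.
have Lb : forall X Y, X <= Lc lam Lam * u -> Y <= Lc lam Lam * u -> e * (X + Y) / 2 <= e * Lc lam Lam * u.
  move=> X Y HX HY. apply (Rle_trans _ (e * ((X + Y) / 2))); [right; field| rewrite Rmult_assoc; apply Rmult_le_compat_l; lra].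
have HTc : 0 <= Tc n lam by rewrite /Tc; apply Rmult_le_pos => //; apply Rplus_le_le_0_compat; [apply Rdiv_le_0_compat; nra| lra].
have HA1 : Rabs a1 <= e * Lc lam Lam * u := Rle_trans _ _ _ B1 (Lb (Nv bx) (Nv bx) ltac:(lra) ltac:(lra)).
have HA2 : Rabs a2 <= e * Lc lam Lam * u := Rle_trans _ _ _ B2 (Lb (Nv bx) (Nv jx) ltac:(lra) ltac:(lra)).
have HA2' : Rabs a2' <= e * Lc lam Lam * u := Rle_trans _ _ _ B2' (Lb (Nv jx) (Nv bx) ltac:(lra) ltac:(lra)).
have HA3 : Rabs a3 <= e * Lc lam Lam * u := Rle_trans _ _ _ B3 (Lb (Nv jx) (Nv jx) ltac:(lra) ltac:(lra)).
have Hph2 : 0 < u ^ 2 + t ^ 2 by rewrite -Eph.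
have Hfa := final_arith Hupos Hph2 He HLu0 HTc Hapos' Hal' HA1 HA2 HA2' HA3 Htau Hc.
apply: (Rle_trans _ _ _ (Rmult_le_pos _ _ (Rlt_le _ _ HK) Hfa)); right.
rewrite Eph; field; lra.
Qed.
End Key.
Lemma entry_bound m (C : mat m) lam Lam : 0 < lam -> symm C ->
  (forall v : vec m, lam * dotv v v <= dotv (matvec C v) v <= Lam * dotv v v) ->
  forall i k, Rabs (C i k) <= Lam.
Proof.
move=> Hl HC Hb i k.
have Hpsd : forall z, 0 <= Qf C z z by move=> z; have := Hb z; have := Nv_ge0 z; rewrite /Nv /Qf; nra.
have Qe : forall j, Qf C (uvec j) (uvec j) <= Lam.
  move=> j; have := Hb (uvec j). rewrite -/(Nv _) /uvec Nv_unit -/(Qf C _ _). lra.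
have E1 : Qf C (uvec k) (uvec i) = C i k by rewrite /Qf /uvec matvec_unit unitv_dot.
have H1 := amgm_psd (uvec k) (uvec i) HC Hpsd Rlt_0_1.
have H2 := amgm_psd (uvec k) (lc (-1) (uvec i) 0 (uvec i)) HC Hpsd Rlt_0_1.
rewrite Qf_lc in H2.
have E2 : Qf C (uvec k) (lc (-1) (uvec i) 0 (uvec i)) = - C i k.
  rewrite /Qf dotv_lcr -/(Qf C _ _) E1; ring.
rewrite E2 in H2. rewrite E1 in H1.
have := Qe i; have := Qe k. move=> ? ?.
apply Rabs_le; split; lra.
Qed.

Lemma c0_pos n delta lam Lam : 0 < delta -> 0 < lam -> 0 < Lam -> 0 < c0 n delta lam Lam.
Proof.
move=> Hd Hl HL. rewrite /c0.
have Ha : 0 < alpha n delta by have := alpha_eq n delta; have := pos_INR n; lra.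
have HLc : 0 <= Lc lam Lam by rewrite /Lc; apply Rplus_le_le_0_compat; [apply Rdiv_le_0_compat; nra | apply Rdiv_le_0_compat; lra].
have HTc : 0 <= Tc n lam by rewrite /Tc; apply Rmult_le_pos; [apply pos_INR| apply Rplus_le_le_0_compat; [apply Rdiv_le_0_compat; nra| lra]].
apply Rdiv_lt_0_compat; nra.
Qed.

Lemma c0_ok n delta lam Lam : 0 < delta -> 0 < lam -> 0 < Lam ->
  c0 n delta lam Lam * (32 * (alpha n delta + 1) * Lc lam Lam + 16 * Lc lam Lam + 4 * Tc n lam) <= 16 * delta.
Proof.
move=> Hd Hl HL. rewrite /c0.
have Ha : 0 < alpha n delta by have := alpha_eq n delta; have := pos_INR n; lra.
have HLc : 0 <= Lc lam Lam by rewrite /Lc; apply Rplus_le_le_0_compat; [apply Rdiv_le_0_compat; nra | apply Rdiv_le_0_compat; lra].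
have HTc : 0 <= Tc n lam by rewrite /Tc; apply Rmult_le_pos; [apply pos_INR| apply Rplus_le_le_0_compat; [apply Rdiv_le_0_compat; nra| lra]].
set D := 32 * (alpha n delta + 1) * Lc lam Lam + 16 * Lc lam Lam + 4 * Tc n lam.
have HD : 0 <= D by rewrite /D; nra.
apply (Rmult_le_reg_r (D + 1)); [lra|].
have -> : 16 * delta / (D + 1) * D * (D + 1) = 16 * delta * D by field; lra.
nra.
Qed.

Section Main.
Variables (n : nat) (delta lam Lam : R) (Om : pt n -> Prop) (A : pt n -> mat (2 * n)) (z0 : pt n).
Hypotheses (Hn : (1 <= n)%nat) (Hl : 0 < lam) (HL : 1 <= Lam).
Hypothesis HM : in_Mn lam Lam Om A.
Hypothesis Hz0 : Om z0.

Let Kb := sqrt (INR (2 * n) * ((INR (2 * n) * (2 * Lam) ^ 2 + 1) / 2) ^ 2).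

Lemma i0 : 'I_(2 * n).
Proof. apply (@Ordinal _ 0). apply/leP. lia. Qed.

Lemma opn_bound z : Om z -> opnorm (matsub (A z) (A z0)) <= Kb.
Proof.
move=> Hz. apply (opnorm_unif i0); first lra.
move=> i k. rewrite /matsub.
have [S1 [_ B1]] := HM Hz. have [S2 [_ B2]] := HM Hz0.
have H1 := entry_bound Hl S1 B1 i k. have H2 := entry_bound Hl S2 B2 i k.
apply Rabs_le; have := proj1 (Rabs_le_between _ _) H1; have := proj1 (Rabs_le_between _ _) H2. lra.
Qed.

Lemma omega_ge z eps : Om z -> Hdist z0 z < eps -> opnorm (matsub (A z) (A z0)) <= omegaA Om A z0 eps.
Proof.
move=> Hz Hd. rewrite /omegaA. apply (Rsup_ub (b := Kb)).
  move=> r [z' [Hz' [_ ->]]]; exact: opn_bound.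
by exists z.
Qed.

Lemma omega_le r b : 0 < r -> (forall z, Om z -> Hdist z0 z < r -> opnorm (matsub (A z) (A z0)) <= b) ->
  omegaA Om A z0 r <= b.
Proof.
move=> Hr Hb. rewrite /omegaA. apply Rsup_le.
  exists (opnorm (matsub (A z0) (A z0))); exists z0; split => //; split => //; by rewrite Hdist_refl.
move=> x [z [Hz [Hd ->]]]; exact: Hb.
Qed.

Lemma final_pt (Hd : 0 < delta) (Hsp : symplectic (A z0)) z zeta : Om z ->
  opnorm (matsub (A z) (A z0)) < c0 n delta lam Lam -> zeta <> @origin n ->
  0 <= - trace (matmul (A z) (HessH (gfun delta (A z0)) zeta)).
Proof.
move=> Hz Ho Hzeta.
have [S0 [_ B0]] := HM Hz0.
have HL0 : 0 < Lam by lra.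
have Hc := c0_pos n Hd Hl HL0.
apply: (key (M := A z0) (A := A z) (e := c0 n delta lam Lam)) => //.
- exact Hl.
- exact HL0.
- exact (opnorm_bound Hc Ho).
- exact: c0_ok.
Qed.
End Main.

Theorem lemma3p6 :
  (forall (n : nat) (delta lam Lam : R),
     (1 <= n)%nat -> 0 < delta < 1 / 2 -> 0 < lam <= 1 -> 1 <= Lam ->
     forall w : R -> R,
     exists eps0, 0 < eps0 /\
       forall (Om : pt n -> Prop) (A : pt n -> mat (2 * n)) (z0 : pt n),
         H_open Om -> in_Mn lam Lam Om A -> Om z0 -> cont_at Om A z0 ->
         symplectic (A z0) ->
         (forall eps, 0 < eps -> omegaA Om A z0 eps = w eps) ->
         forall z zeta, Om z -> Hdist z0 z < eps0 -> zeta <> @origin n ->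
           0 <= - trace (matmul (A z) (HessH (gfun delta (A z0)) zeta)))
  /\
  (forall (n : nat) (delta lam Lam : R) (om : R -> R),
     (1 <= n)%nat -> 0 < delta < 1 / 2 -> 0 < lam <= 1 -> 1 <= Lam ->
     modulus om ->
     exists eps0, 0 < eps0 /\
       forall (Om : pt n -> Prop) (A : pt n -> mat (2 * n)) (z0 : pt n),
         H_open Om -> in_Mn lam Lam Om A -> in_C Om om A -> Om z0 ->
         cont_at Om A z0 -> symplectic (A z0) ->
         forall z zeta, Om z -> Hdist z0 z < eps0 -> zeta <> @origin n ->
           0 <= - trace (matmul (A z) (HessH (gfun delta (A z0)) zeta))).
Proof.
split.
- move=> n delta lam Lam Hn [Hd _] [Hl _] HL w.
  have HL0 : 0 < Lam by lra.
  have Hc := c0_pos n Hd Hl HL0.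
  case: (classic (exists e, 0 < e /\ w e < c0 n delta lam Lam)) => [[e [He Hwe]]|Hno].
    exists e; split => // Om A z0 _ HM Hz0 _ Hsp Hw z zeta Hz Hdz Hzeta.
    apply: (final_pt Hl HL HM Hz0 Hd Hsp Hz _ Hzeta).
    apply: (Rle_lt_trans _ _ _ (omega_ge Hn Hl HL HM Hz0 Hz Hdz)). by rewrite Hw.
  exists 1; split; first lra.
  move=> Om A z0 _ HM Hz0 Hcont Hsp Hw z zeta Hz Hdz Hzeta.
  exfalso. have Hc2 : 0 < c0 n delta lam Lam / 2 by lra.
  have [r [Hr Hr2]] := Hcont _ Hc2.
  apply Hno; exists r; split => //. rewrite -Hw //.
  apply: (Rle_lt_trans _ (c0 n delta lam Lam / 2)); last lra.
  apply: (omega_le Hz0 Hr) => z' Hz' Hd'. left; exact: Hr2.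
- move=> n delta lam Lam om Hn [Hd _] [Hl _] HL [Hom1 [Hom2 [Hom3 Hom4]]].
  have HL0 : 0 < Lam by lra.
  have Hc := c0_pos n Hd Hl HL0.
  have [r [Hr Hrom]] := Hom4 _ Hc.
  set eps0 := Rmin (r / 2) (1 / 2).
  have He0 : 0 < eps0 by apply Rmin_pos; lra.
  have He1 : eps0 < r by apply (Rle_lt_trans _ (r / 2)); [apply Rmin_l| lra].
  have He2 : eps0 < 1 by apply (Rle_lt_trans _ (1 / 2)); [apply Rmin_r| lra].
  exists eps0; split => // Om A z0 _ HM [_ HC] Hz0 _ Hsp z zeta Hz Hdz Hzeta.
  apply: (final_pt Hl HL HM Hz0 Hd Hsp Hz _ Hzeta).
  apply: (Rle_lt_trans _ _ _ (omega_ge Hn Hl HL HM Hz0 Hz Hdz)).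
  apply: (Rle_lt_trans _ (om eps0)); first (apply HC => //; lra).
  apply Hrom; lra.
Qed.
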